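(* Consider any one of the following games on $n$ cups: the fixed $p$-processor cup game (for some fixed $p$) or the variable-processor cup game, each in either the non-negative-fill version or the negative-fill version. Then for every state $A$ and every game length $t\ge 0$, $\operatorname{GREEDY}(A,t)=\operatorname{OPT}(A,t)$.
   Context: A state is a multiset of $n$ real fills (states equal up to permutation are identified). In the variable-processor cup game, in each round the filler chooses an integer $1\le p\le n$ and reals $a_1,\dots,a_n\in[0,1]$ with $\sum_i a_i=p$ and adds $a_i$ to cup $i$; then the emptier chooses exactly $p$ distinct cups and removes $1$ unit from each: in the non-negative-fill version a chosen cup with fill $x$ becomes $\max(0,x-1)$, in the negative-fill version it becomes $x-1$. The fixed $p$-processor cup game is the same except that $p$ is the same fixed value in every round. The backlog of a state is its maximum fill. $\operatorname{OPT}(S,0)$ is the backlog of $S$, and for $t>0$, $\operatorname{OPT}(S,t)=\sup_{S'}\min_{S''}\operatorname{OPT}(S'',t-1)$, where $S'$ ranges over states reachable from $S$ by a filler move and $S''$ over states reachable from $S'$ by an emptier move. $\operatorname{GREEDY}(S,t)$ is the supremum backlog a filler can achieve at the end of a $t$-round game starting from $S$ when the emptier is greedy, i.e. always empties from the $p$ fullest cups after the filler's move. *)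

(* Defs.v *)
From HB Require Import structures.
From mathcomp Require Import all_boot all_order all_algebra.
From mathcomp Require Import all_classical all_reals ereal.
Set Implicit Arguments. Unset Strict Implicit. Unset Printing Implicit Defensive.
Import Order.TTheory GRing.Theory Num.Theory.
Local Open Scope ring_scope.
Local Open Scope classical_set_scope.

Variant fill_mode := NonNegFill | NegFill.

Variant proc_mode := FixedProc of nat | VariableProc.

(* A state on n cups: fill of each cup (cup labels are irrelevant: all
   quantities below are invariant under permutation of cups). *)
Definition state (R : realType) (n : nat) := 'I_n -> R.

Definition valid_p (pm : proc_mode) (n p : nat) : bool :=
  (1 <= p <= n)%N &&
  match pm with FixedProc p0 => p == p0 | VariableProc => true end.

Definition backlog (R : realType) (n : nat) (S : state R n) : \bar R :=
  \big[maxe/-oo%E]_(i < n) (S i)%:E.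

Definition filler_move (R : realType) (pm : proc_mode) (n : nat)
  (S : state R n) (p : nat) (S' : state R n) : Prop :=
  valid_p pm n p /\
  exists a : 'I_n -> R,
    (forall i, 0 <= a i <= 1) /\ \sum_(i < n) a i = p%:R /\
    (forall i, S' i = S i + a i).

Definition drop1 (R : realType) (fm : fill_mode) (x : R) : R :=
  match fm with NonNegFill => Num.max 0 (x - 1) | NegFill => x - 1 end.

Definition emptier_move (R : realType) (fm : fill_mode) (n : nat)
  (p : nat) (S' S'' : state R n) : Prop :=
  exists C : {set 'I_n}, #|C| = p /\
    (forall i, S'' i = if i \in C then drop1 fm (S' i) else S' i).

(* Greedy emptier: empties the p fullest cups (ties broken by cup index;
   the resulting multiset does not depend on the tie-breaking). *)
Definition greedy_move (R : realType) (fm : fill_mode) (n : nat)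
  (p : nat) (S' : state R n) : state R n :=
  fun i => if ltn #|[set j : 'I_n | (S' i < S' j) || ((S' j == S' i) && ltn j i)]| p
           then drop1 fm (S' i) else S' i.

Fixpoint OPT (R : realType) (pm : proc_mode) (fm : fill_mode) (n : nat)
  (S : state R n) (t : nat) {struct t} : \bar R :=
  match t with
  | 0 => backlog S
  | t'.+1 =>
      ereal_sup [set v | exists p (S' : state R n), filler_move pm S p S' /\
        v = ereal_inf [set w | exists S'' : state R n,
                          emptier_move fm p S' S'' /\ w = OPT pm fm S'' t']]
  end.

Fixpoint GREEDY (R : realType) (pm : proc_mode) (fm : fill_mode) (n : nat)
  (S : state R n) (t : nat) {struct t} : \bar R :=
  match t with
  | 0 => backlog S
  | t'.+1 =>
      ereal_sup [set v | exists p (S' : state R n), filler_move pm S p S' /\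
        v = GREEDY pm fm (greedy_move fm p S') t']
  end.

(* Main.v *)
Require Import Defs.
From HB Require Import structures.
From mathcomp Require Import all_boot all_order all_algebra.
From mathcomp Require Import all_classical all_reals ereal.
From mathcomp Require Import lra.
From mathcomp Require Import fingroup perm.
Set Implicit Arguments. Unset Strict Implicit. Unset Printing Implicit Defensive.
Import Order.TTheory GRing.Theory Num.Theory.
Local Open Scope ring_scope.

Lemma drop1_mono (R : realType) fm (x y : R) : x <= y -> Defs.drop1 fm x <= Defs.drop1 fm y.
Proof.
case: fm => /= H; last by lra.
rewrite !maxEle; do 2 case: ifP => ? //; lra.
Qed.

Lemma drop1_ge1 (R : realType) fm (x : R) : 1 <= x -> Defs.drop1 fm x = x - 1.
Proof. by case: fm => //= H; rewrite maxEle; case: ifP => //; lra. Qed.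

Lemma drop1_lt1 (R : realType) (x : R) : x < 1 -> Defs.drop1 NonNegFill x = 0.
Proof. by move=> H /=; rewrite maxEle; case: ifP => //; lra. Qed.

Lemma drop1_ge0 (R : realType) (x : R) : 0 <= Defs.drop1 NonNegFill x.
Proof. by rewrite /= le_max lexx. Qed.

Definition cond (R : realType) (fm : fill_mode) (a : R) : Prop :=
  match fm with NonNegFill => 1 <= a | NegFill => True end.

Lemma drop1_cond (R : realType) fm (x : R) : cond fm x -> Defs.drop1 fm x = x - 1.
Proof. by case: fm => //= H; apply: (drop1_ge1 NonNegFill). Qed.

Definition rkset (R : realType) n (v : state R n) (i : 'I_n) : {set 'I_n} :=
  [set j : 'I_n | (v i < v j) || ((v j == v i) && (j < i)%N)].

Lemma rk_sub (R : realType) n (v : state R n) i j :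
  j \in rkset v i -> (#|rkset v j| < #|rkset v i|)%N.
Proof.
move=> Hj; apply: proper_card; apply/properP; split; last first.
  by exists j => //; rewrite inE ltxx eqxx ltnn.
apply/fintype.subsetP => k; move: Hj; rewrite !inE => /orP[H|/andP[/eqP H1 H2]] /orP[K|/andP[/eqP K1 K2]].
- by rewrite (lt_trans H K).
- by rewrite K1 H.
- by rewrite -H1 K.
- by rewrite K1 H1 eqxx (ltn_trans K2 H2) orbT.
Qed.

Lemma rk_total (R : realType) n (v : state R n) i j :
  i != j -> (j \in rkset v i) || (i \in rkset v j).
Proof.
move=> Hij; rewrite !inE.
case: (ltgtP (v i) (v j)) => //= H.
case: (ltngtP i j) => // H'.
by move: Hij; rewrite (val_inj H') eqxx.
Qed.

Definition Pg (R : realType) n (p : nat) (v : state R n) : {set 'I_n} :=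
  [set i | (#|rkset v i| < p)%N].

Definition E (R : realType) fm n (C : {set 'I_n}) (v : state R n) : state R n :=
  fun i => if i \in C then Defs.drop1 fm (v i) else v i.

Lemma card_cset n (P : 'I_n -> bool) :
  #|[set j : 'I_n | P j]%classic| = #|[set j : 'I_n | P j]|.
Proof. apply: eq_card => j; rewrite [RHS]finset.in_set; apply/idP/idP; rewrite classical_sets.inE /=; done. Qed.

Lemma greedyE (R : realType) fm n p (v : state R n) :
  greedy_move fm p v = E fm (Pg p v) v.
Proof.
apply: funext => i; rewrite /greedy_move /E card_cset /Pg finset.in_set //.
Qed.

Definition valid (R : realType) n (C : {set 'I_n}) (v : state R n) :=
  forall i j, i \in C -> j \notin C -> v j <= v i.

Lemma Pg_valid (R : realType) n p (v : state R n) : valid (Pg p v) v.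
Proof.
move=> i j; rewrite !inE -leqNgt => Hi Hj.
rewrite leNgt; apply/negP => H.
have : j \in rkset v i by rewrite inE H.
move/rk_sub => H2.
by move: (leq_ltn_trans Hj (ltn_trans H2 Hi)); rewrite ltnn.
Qed.

Lemma rk_lt (R : realType) n (v : state R n) i : (#|rkset v i| < n)%N.
Proof.
rewrite -[X in (_ < X)%N]card_ord; apply: proper_card; apply/properP; split.
  exact: subset_predT.
by exists i => //; rewrite inE ltxx eqxx ltnn.
Qed.

Lemma card_lt_ord n p : (p <= n)%N -> #|[set k : 'I_n | (k < p)%N]| = p.
Proof.
move=> Hp.
have -> : [set k : 'I_n | (k < p)%N] = [set widen_ord Hp k | k : 'I_p].
  apply/setP => k; rewrite inE; apply/idP/imsetP.
    by move=> Hk; exists (Ordinal Hk) => //; apply: val_inj.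
  by case=> k' _ ->; rewrite /= ltn_ord.
rewrite card_imset ?card_ord //.
by move=> a b /(congr1 val) /= H; apply: val_inj.
Qed.

Lemma card_Pg (R : realType) n p (v : state R n) : (p <= n)%N -> #|Pg p v| = p.
Proof.
move=> Hp.
pose r := fun i => Ordinal (rk_lt v i).
have rinj : injective r.
  move=> i j /(congr1 val) /= H; apply/eqP; apply/negPn/negP => Hij.
  by case/orP: (rk_total v Hij) => /rk_sub; rewrite H ltnn.
have -> : Pg p v = r @^-1: [set k : 'I_n | (k < p)%N].
  by apply/setP => i; rewrite !inE.
by rewrite card_preimset // card_lt_ord.
Qed.


Definition tr (R : realType) n (x : state R n) (u w : 'I_n) : state R n :=
  fun k => if k == u then x u - 1 else if k == w then x w + 1 else x k.

Inductive O (R : realType) (fm : fill_mode) (n : nat) : state R n -> state R n -> Prop :=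
| Orefl x : O fm x x
| Otrans x y z : O fm x y -> O fm y z -> O fm x z
| Operm x (s : {perm 'I_n}) : O fm x (fun i => x (s i))
| Oinc x y (i : 'I_n) : x i <= y i -> (forall k, k != i -> y k = x k) -> O fm x y
| Otr x (u w : 'I_n) : u != w -> x u - 1 <= x w -> cond fm (x u) -> O fm x (tr x u w).

Lemma Oeq (R : realType) fm n (x y : state R n) : (forall i, x i = y i) -> O fm x y.
Proof. move=> H; have -> : y = x by apply: funext => i; rewrite H. exact: Orefl. Qed.

Lemma Ole (R : realType) fm n (x y : state R n) : (forall i, x i <= y i) -> O fm x y.
Proof.
move=> H.
pose mix k : state R n := fun i => if (i < k)%N then y i else x i.
have step : forall k, O fm x (mix k).
  elim=> [|k IH]; first by apply: Oeq => i; rewrite /mix ltn0.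
  apply: Otrans IH _.
  case: (ltnP k n) => Hk.
    apply: (@Oinc _ _ _ _ _ (Ordinal Hk)); rewrite /mix /= ?ltnSn ?ltnn //.
    move=> j Hj; rewrite ltnS leq_eqVlt.
    have -> : (nat_of_ord j == k) = false.
      by apply/negbTE; apply: contra Hj => /eqP Hjk; apply/eqP/val_inj.
    by [].
  apply: Oeq => i; rewrite /mix.
  by rewrite (leq_trans (ltn_ord i) Hk) (leq_trans (ltn_ord i) (leq_trans Hk (leqnSn k))).
apply: Otrans (step n) _; apply: Oeq => i; by rewrite /mix ltn_ord.
Qed.

Lemma PL (R : realType) fm n (X Y : state R n) (u w : 'I_n) (a b : R) :
  u != w -> a <= b -> X u = a -> X w = Defs.drop1 fm b ->
  Y u = Defs.drop1 fm a -> Y w = b ->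
  (forall k, k != u -> k != w -> X k <= Y k) -> O fm X Y.
Proof.
move=> uw ab Xu Xw Yu Yw Hk.
have wu : w != u by rewrite eq_sym.
have cu : 1 <= a -> cond fm (X u) by case: fm {Xw Yu} => //=; rewrite Xu.
have trle : forall Z : state R n, Z u - 1 <= Y u -> Z w + 1 <= Y w ->
    (forall k, k != u -> k != w -> Z k <= Y k) -> O fm (tr Z u w) Y.
  move=> Z H1 H2 H3; apply: Ole => k; rewrite /tr.
  case: (eqVneq k u) => [->//|ku]; case: (eqVneq k w) => [->//|kw].
  exact: H3.
case: (lerP 1 a) => a1.
  have b1 : 1 <= b by lra.
  apply: Otrans (Otr uw _ _) _.
  - by rewrite Xu Xw drop1_ge1 //; lra.
  - exact: cu.
  apply: trle; rewrite ?Yu ?Yw ?Xu ?Xw ?drop1_ge1 //; lra.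
case: fm Xw Yu trle cu => Xw Yu trle _; last first.
  apply: Otrans (Otr uw _ _) _ => //.
    by rewrite Xu Xw /=; lra.
  apply: trle; rewrite ?Yu ?Yw ?Xu ?Xw /=; try lra; exact: Hk.
case: (lerP 1 b) => b1.
  pose X1 : state R n := fun k => if k == u then 1 else X k.
  apply: (@Otrans _ _ _ _ X1).
    apply: Ole => k; rewrite /X1; case: (eqVneq k u) => [->|//]; rewrite Xu; lra.
  have X1u : X1 u = 1 by rewrite /X1 eqxx.
  have X1w : X1 w = b - 1 by rewrite /X1 (negbTE wu) Xw drop1_ge1.
  apply: Otrans (Otr uw _ _) _.
  - by rewrite X1u X1w; lra.
  - by rewrite X1u /=.
  apply: trle; rewrite ?X1u ?X1w ?Yu ?Yw ?drop1_lt1 //; try lra.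
  by move=> k ku kw; rewrite /X1 (negbTE ku); apply: Hk.
pose Z : state R n := fun k => Y (tperm u w k).
apply: (@Otrans _ _ _ _ Z).
  apply: Ole => k; rewrite /Z.
  case: (eqVneq k u) => [->|ku]; first by rewrite tpermL Yw Xu.
  case: (eqVneq k w) => [->|kw]; first by rewrite tpermR Yu Xw drop1_lt1 ?drop1_ge0 //; lra.
  by rewrite tpermD 1?eq_sym //; apply: Hk.
apply: Otrans (@Operm _ _ _ Z (tperm u w)) _.
by apply: Oeq => k; rewrite /Z tpermK.
Qed.

Lemma L1 (R : realType) fm n (v : state R n) (D C : {set 'I_n}) :
  valid D v -> #|C| = #|D| -> O fm (E fm D v) (E fm C v).
Proof.
move=> HD.
move Hk: #|C :\: D| => k; elim: k C Hk => [|k IH] C Hk HC.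
  have CD : C \subset D by rewrite -finset.setD_eq0 -cards_eq0 Hk.
  have -> : C = D by apply/eqP; rewrite eqEcard CD HC leqnn.
  exact: Orefl.
have /finset.set0Pn [x Hx] : C :\: D != finset.set0 by rewrite -cards_eq0 Hk.
have HDC : #|D :\: C| = k.+1 by rewrite cardsD finset.setIC -HC -cardsD Hk.
have /finset.set0Pn [y Hy] : D :\: C != finset.set0 by rewrite -cards_eq0 HDC.
move: (Hx) (Hy); rewrite !inE => /andP [xD xC] /andP [yC yD].
have xy : x != y by apply: contraNneq xD => ->.
pose C' := y |: (C :\ x).
have HC' : #|C'| = #|D|.
  rewrite cardsU1 !inE (negbTE yC) andbF /= -HC (cardsD1 x C) xC.
  by [].
have Hk' : #|C' :\: D| = k.
  have -> : C' :\: D = (C :\: D) :\ x.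
    apply/setP => z; rewrite !inE; case: (eqVneq z y) => [->|zy] /=.
      by rewrite yD /= andbF.
    by case: (z \in D); case: (z == x); case: (z \in C).
  by move: Hk; rewrite (cardsD1 x (C :\: D)) Hx add1n => -[].
apply: Otrans (IH C' Hk' HC') _.
apply: (PL (u:=x) (w:=y) (a:=v x) (b:=v y)) => //.
- exact: HD.
- by rewrite /E !inE (negbTE xy) eqxx.
- by rewrite /E /C' !inE eqxx.
- by rewrite /E xC.
- by rewrite /E (negbTE yC).
move=> k1 k1x k1y; rewrite /E /C' !inE (negbTE k1x) (negbTE k1y) /=.
by [].
Qed.


Lemma exmax (R : realType) n (S : {set 'I_n}) (F : 'I_n -> R) j0 :
  j0 \in S -> exists2 j, j \in S & forall k, k \in S -> F k <= F j.
Proof.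
move=> H; case: (@arg_maxP _ _ _ j0 (fun k => k \in S) F H) => j Hj Hm.
by exists j.
Qed.

Lemma exmin (R : realType) n (S : {set 'I_n}) (F : 'I_n -> R) j0 :
  j0 \in S -> exists2 j, j \in S & forall k, k \in S -> F j <= F k.
Proof.
move=> H; case: (@arg_minP _ _ _ j0 (fun k => k \in S) F H) => j Hj Hm.
by exists j.
Qed.

Lemma g_perm (R : realType) fm n p (v : state R n) (s : {perm 'I_n}) :
  (p <= n)%N ->
  O fm (greedy_move fm p v) (greedy_move fm p (fun i => v (s i))).
Proof.
move=> pn; rewrite !greedyE.
set P' := Pg p (fun i => v (s i)).
pose C := [set i | (s^-1)%g i \in P'].
apply: (@Otrans _ _ _ _ (E fm C v)).
  apply: L1; first exact: Pg_valid.
  have -> : C = (s^-1)%g @^-1: P' by apply/setP => i; rewrite !inE.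
  by rewrite card_preimset ?card_Pg //; apply: perm_inj.
apply: Otrans (@Operm _ _ _ (E fm C v) s) _.
by apply: Oeq => i; rewrite /E /C inE permK.
Qed.

Lemma g_inc (R : realType) fm n p (x y : state R n) (i : 'I_n) :
  (p <= n)%N -> x i <= y i -> (forall k, k != i -> y k = x k) ->
  O fm (greedy_move fm p x) (greedy_move fm p y).
Proof.
move=> pn Hi Ho; rewrite !greedyE.
set P := Pg p x.
have vP : valid P x by exact: Pg_valid.
have Hle : forall k, x k <= y k.
  by move=> k; case: (eqVneq k i) => [->//|ki]; rewrite Ho.
have cP : #|Pg p y| = #|P| by rewrite !card_Pg.
clearbody P.
suff [Q vQ [cQ HQ]] : exists2 Q, valid Q y & #|Q| = #|P| /\ O fm (E fm P x) (E fm Q y).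
  by apply: Otrans HQ _; apply: L1 => //; rewrite cP cQ.
case: (boolP (i \in P)) => iP.
  exists P; last split => //.
    move=> a b aP bP; have bi : b != i by apply: contraNneq bP => ->.
    by rewrite Ho // (le_trans (vP a b aP bP) (Hle a)).
  by apply: Ole => k; rewrite /E; case: ifP => _; [apply: drop1_mono|].
case: (boolP [exists k in P, x k < y i]) => [/existsP [k0 /andP [k0P Hk0]] | /existsPn H].
  have [m mP Hm] := exmin x k0P.
  have xm : x m < y i by apply: le_lt_trans (Hm _ k0P) Hk0.
  have im : i != m by apply: contraNneq iP => ->.
  pose Q := i |: (P :\ m).
  have vQ : valid Q y.
    move=> a b; rewrite !inE => /orP [/eqP ->|/andP [am aP]];
      rewrite negb_or negb_and negbK => /andP [bi /orP [/eqP ->|bP]].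
    - by rewrite Ho 1?eq_sym // ltW.
    - by rewrite Ho // ltW // (le_lt_trans (vP _ _ mP bP)).
    - have ai : a != i by apply: contraNneq iP => <-.
      by rewrite Ho 1?eq_sym // (Ho a) //; exact: Hm.
    - have ai : a != i by apply: contraNneq iP => <-.
      by rewrite Ho // (Ho a) //; exact: vP.
  exists Q => //; split.
    by rewrite cardsU1 !inE (negbTE iP) andbF /= (cardsD1 m P) mP.
  pose Z : state R n := fun k => E fm Q y (tperm i m k).
  apply: (@Otrans _ _ _ _ Z).
    apply: Ole => k; rewrite /Z /E.
    case: (eqVneq k i) => [->|ki].
      by rewrite tpermL (negbTE iP) !inE eq_sym (negbTE im) eqxx /= Ho 1?eq_sym // vP.
    case: (eqVneq k m) => [->|km].
      by rewrite tpermR mP !inE eqxx /=; apply: drop1_mono; apply: ltW.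
    by rewrite tpermD 1?eq_sym // !inE (negbTE ki) km /= Ho.
  apply: Otrans (@Operm _ _ _ Z (tperm i m)) _.
  by apply: Oeq => k; rewrite /Z tpermK.
exists P; last split => //.
  move=> a b aP bP.
  have ai : a != i by apply: contraNneq iP => <-.
  case: (eqVneq b i) => [->|bi].
    by move: (H a); rewrite aP /= -leNgt (Ho a ai).
  by rewrite (Ho b bi) (Ho a ai); apply: vP.
by apply: Ole => k; rewrite /E; case: ifP => _; [apply: drop1_mono|].
Qed.

Lemma cond_le (R : realType) fm (a b : R) : cond fm a -> a <= b -> cond fm b.
Proof. by case: fm => //= H1 H2; apply: le_trans H2. Qed.

Lemma GT (R : realType) fm n p (z : state R n) (u w : 'I_n) :
  (p <= n)%N -> u != w -> z u - 1 <= z w -> cond fm (z u) ->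
  O fm (greedy_move fm p z) (greedy_move fm p (tr z u w)).
Proof.
move=> pn uw Huw Hc; rewrite !greedyE.
set v := tr z u w.
have wu : w != u by rewrite eq_sym.
have vu : v u = z u - 1 by rewrite /v /tr eqxx.
have vw : v w = z w + 1 by rewrite /v /tr eqxx (negbTE wu).
have vo : forall k, k != u -> k != w -> v k = z k.
  by move=> k ku kw; rewrite /v /tr (negbTE ku) (negbTE kw).
have vge : forall k, k != u -> z k <= v k.
  move=> k ku; case: (eqVneq k w) => [->|kw]; last by rewrite vo.
  by rewrite vw lerDl.
have fu : Defs.drop1 fm (z u) = z u - 1 by apply: drop1_cond.
have fw : Defs.drop1 fm (v w) = z w.
  rewrite vw drop1_cond ?addrK //; apply: cond_le Hc _; lra.
clearbody v.
set P := Pg p z.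
have vP : valid P z by exact: Pg_valid.
have cP : #|Pg p v| = #|P| by rewrite !card_Pg.
clearbody P.
suff [Q vQ [cQ HQ]] : exists2 Q, valid Q v & #|Q| = #|P| /\ O fm (E fm P z) (E fm Q v).
  by apply: Otrans HQ _; apply: L1 => //; rewrite cP cQ.
case: (boolP (u \in P)) => uP; case: (boolP (w \in P)) => wP.
-
  case: (boolP [exists j in ~: P, z u - 1 < z j]) => [/existsP [j0 /andP [j0P Hj0]] | /existsPn H].
    have [j jP Hj] := exmax z j0P.
    move: (jP); rewrite inE => jP'.
    have zj : z u - 1 < z j by apply: lt_le_trans Hj0 (Hj _ j0P).
    have ju : j != u by apply: contraNneq jP' => ->.
    have jw : j != w by apply: contraNneq jP' => ->.
    pose Q := j |: (P :\ u).
    exists Q; last split.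
    + move=> a b; rewrite !inE => /orP [/eqP ->|/andP [au aP]];
        rewrite negb_or negb_and negbK => /andP [bj /orP [/eqP ->|bP]].
      * by rewrite vu vo //; apply: ltW.
      * have bu : b != u by apply: contraNneq bP => ->.
        have bw : b != w by apply: contraNneq bP => ->.
        by rewrite !vo //; apply: Hj; rewrite inE.
      * rewrite vu; apply: le_trans (vge _ au); apply: ltW; apply: lt_le_trans zj _.
        exact: vP.
      * have bu : b != u by apply: contraNneq bP => ->.
        have bw : b != w by apply: contraNneq bP => ->.
        rewrite vo //; apply: le_trans (vge _ au); exact: vP.
    + by rewrite cardsU1 !inE (negbTE ju) (negbTE jP') /= (cardsD1 u P) uP.
    apply: (PL (u:=j) (w:=w) (a:=z j) (b:=z w)) => //.
    * exact: vP.
    * by rewrite /E (negbTE jP').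
    * by rewrite /E wP.
    * by rewrite /E !inE eqxx /= vo.
    * by rewrite /E !inE eq_sym (negbTE jw) wu wP /= fw.
    move=> k kj kw; rewrite /E !inE (negbTE kj) /=.
    case: (eqVneq k u) => [->|ku] /=; first by rewrite uP fu vu.
    by rewrite vo.
  exists P; last split => //.
    move=> a b aP bP.
    have bu : b != u by apply: contraNneq bP => ->.
    have bw : b != w by apply: contraNneq bP => ->.
    rewrite vo //; case: (eqVneq a u) => [->|au].
      by move: (H b); rewrite inE bP /= -leNgt vu.
    apply: le_trans (vge _ au); exact: vP.
  apply: (PL (u:=u) (w:=w) (a:=z u - 1) (b:=z w)) => //.
  * by rewrite /E uP fu.
  * by rewrite /E wP.
  * by rewrite /E uP vu.
  * by rewrite /E wP fw.
  by move=> k ku kw; rewrite /E vo.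
-
  pose Q := w |: (P :\ u).
  exists Q; last split.
  + move=> a b; rewrite !inE => /orP [/eqP ->|/andP [au aP]];
      rewrite negb_or negb_and negbK => /andP [bw /orP [/eqP ->|bP]].
    * rewrite vu vw; lra.
    * have bu : b != u by apply: contraNneq bP => ->.
      rewrite vo // vw; apply: le_trans (vP _ _ uP bP) _; lra.
    * rewrite vu; apply: le_trans Huw _; apply: le_trans (vge _ au); exact: vP.
    * have bu : b != u by apply: contraNneq bP => ->.
      rewrite vo //; apply: le_trans (vge _ au); exact: vP.
  + by rewrite cardsU1 !inE (negbTE wu) (negbTE wP) /= (cardsD1 u P) uP.
  apply: Ole => k; rewrite /E !inE.
  case: (eqVneq k u) => [->|ku] /=; first by rewrite uP (negbTE uw) fu vu.
  case: (eqVneq k w) => [->|kw] /=; first by rewrite (negbTE wP) fw.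
  by rewrite vo.
-
  exists P; last split => //.
    move=> a b aP bP.
    have au : a != u by apply: contraNneq uP => <-.
    apply: le_trans (vge _ au).
    case: (eqVneq b u) => [->|bu]; first by rewrite vu; apply: le_trans (vP _ _ aP uP); lra.
    have bw : b != w by apply: contraNneq bP => ->.
    rewrite vo //; exact: vP.
  apply: (PL (u:=u) (w:=w) (a:=z u) (b:=z w)) => //.
  * exact: vP.
  * by rewrite /E (negbTE uP).
  * by rewrite /E wP.
  * by rewrite /E (negbTE uP) vu fu.
  * by rewrite /E wP fw.
  by move=> k ku kw; rewrite /E vo.
-
  case: (boolP [exists i in P, z i < z w + 1]) => [/existsP [i0 /andP [i0P Hi0]] | /existsPn H].
    have [m mP Hm] := exmin z i0P.
    have zm : z m < z w + 1 by apply: le_lt_trans (Hm _ i0P) Hi0.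
    have mu : m != u by apply: contraNneq uP => <-.
    have mw : m != w by apply: contraNneq wP => <-.
    pose Q := w |: (P :\ m).
    exists Q; last split.
    + move=> a b; rewrite !inE => /orP [/eqP ->|/andP [am aP]];
        rewrite negb_or negb_and negbK => /andP [bw /orP [/eqP ->|bP]].
      * by rewrite vw vo //; apply: ltW.
      * rewrite vw; case: (eqVneq b u) => [->|bu]; first by rewrite vu; lra.
        rewrite vo //; apply: ltW; apply: le_lt_trans zm; exact: vP.
      * have au : a != u by apply: contraNneq uP => <-.
        have aw : a != w by apply: contraNneq wP => <-.
        by rewrite !vo //; apply: Hm.
      * have au : a != u by apply: contraNneq uP => <-.
        have aw : a != w by apply: contraNneq wP => <-.
        rewrite (vo a) //; case: (eqVneq b u) => [->|bu].
          by rewrite vu; apply: le_trans (vP _ _ aP uP); lra.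
        rewrite vo //; exact: vP.
    + by rewrite cardsU1 !inE (negbTE wP) andbF /= (cardsD1 m P) mP.
    have um : u != m by rewrite eq_sym.
    apply: (PL (u:=u) (w:=m) (a:=z u) (b:=z m)) => //.
    * exact: vP.
    * by rewrite /E (negbTE uP).
    * by rewrite /E mP.
    * by rewrite /E !inE (negbTE uw) (negbTE uP) andbF /= vu fu.
    * by rewrite /E !inE eqxx (negbTE mw) /= vo.
    move=> k ku km; rewrite /E !inE km /=.
    case: (eqVneq k w) => [->|kw] /=; first by rewrite (negbTE wP) fw.
    by rewrite vo.
  exists P; last split => //.
    move=> a b aP bP.
    have au : a != u by apply: contraNneq uP => <-.
    have aw : a != w by apply: contraNneq wP => <-.
    rewrite (vo a) //.
    case: (eqVneq b u) => [->|bu]; first by rewrite vu; apply: le_trans (vP _ _ aP uP); lra.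
    case: (eqVneq b w) => [->|bw]; first by move: (H a); rewrite aP /= -leNgt vw.
    rewrite vo //; exact: vP.
  apply: Otrans (@Otr _ _ _ (E fm P z) u w uw _ _) _.
  + by rewrite /E (negbTE uP) (negbTE wP).
  + by rewrite /E (negbTE uP).
  apply: Ole => k; rewrite /tr /E.
  case: (eqVneq k u) => [->|ku]; first by rewrite (negbTE uP) vu.
  case: (eqVneq k w) => [->|kw]; first by rewrite (negbTE wP) vw.
  by rewrite vo.
Qed.


Lemma BL (R : realType) n (x y : state R n) :
  (forall i, exists j, x i <= y j) -> (backlog x <= backlog y)%E.
Proof.
move=> H; rewrite /backlog; apply: bigmax_le => //; first exact: leNye.
move=> i _; have [j Hj] := H i.
apply: le_trans (le_bigmax _ _ j); by rewrite lee_fin.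
Qed.

Lemma O_dom (R : realType) fm n (x y : state R n) :
  O fm x y -> forall i, exists j, x i <= y j.
Proof.
elim=> {x y}.
- by move=> x i; exists i.
- move=> x y z _ H1 _ H2 i; have [j Hj] := H1 i; have [k Hk] := H2 j.
  by exists k; apply: le_trans Hk.
- move=> x s i; exists ((s^-1)%g i); by rewrite permKV.
- move=> x y i Hi Ho k; exists k.
  by case: (eqVneq k i) => [->//|ki]; rewrite Ho.
- move=> x u w uw Huw _ k.
  have wu : w != u by rewrite eq_sym.
  case: (eqVneq k u) => [->|ku].
    by exists w; rewrite /tr (negbTE wu) eqxx; lra.
  case: (eqVneq k w) => [->|kw].
    by exists w; rewrite /tr (negbTE wu) eqxx; lra.
  by exists k; rewrite /tr (negbTE ku) (negbTE kw).
Qed.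

Lemma sum_pair (R : realType) n (F G : 'I_n -> R) (u w : 'I_n) :
  u != w -> (forall k, k != u -> k != w -> F k = G k) ->
  F u + F w = G u + G w -> \sum_i F i = \sum_i G i.
Proof.
move=> uw Ho Hs; have wu : w != u by rewrite eq_sym.
have e : forall H : 'I_n -> R,
    \sum_i H i = H u + (H w + \sum_(i | (i != u) && (i != w)) H i).
  by move=> H; rewrite (bigD1 u) //= (bigD1 w) //=.
rewrite !e (eq_bigr G); last by move=> k /andP [ku kw]; apply: Ho.
by rewrite !addrA Hs.
Qed.

Lemma SIM (R : realType) pm fm n (x y : state R n) : O fm x y ->
  forall p S', filler_move pm x p S' ->
  exists S'', filler_move pm y p S'' /\
    O fm (greedy_move fm p S') (greedy_move fm p S'').
Proof.
elim=> {x y}.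
- by move=> x p S' H; exists S'; split => //; apply: Orefl.
- move=> x y z _ H1 _ H2 p S' H.
  have [S1 [HS1 O1]] := H1 p S' H.
  have [S2 [HS2 O2]] := H2 p S1 HS1.
  by exists S2; split => //; apply: Otrans O2.
- move=> x s p S' [Hp [a [Ha [Hs HS]]]].
  have pn : (p <= n)%N by case/andP: Hp => /andP [].
  exists (fun i => S' (s i)); split; last exact: g_perm.
  split => //; exists (fun i => a (s i)); split => //; split.
    by rewrite -Hs; symmetry; exact: (reindex_inj (@perm_inj _ s)).
  by move=> i; rewrite HS.
- move=> x y i Hi Ho p S' [Hp [a [Ha [Hs HS]]]].
  have pn : (p <= n)%N by case/andP: Hp => /andP [].
  exists (fun k => y k + a k); split.
    by split => //; exists a.
  have H1 : S' i <= y i + a i by rewrite HS lerD2r.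
  have H2 : forall k, k != i -> y k + a k = S' k by move=> k ki; rewrite HS Ho.
  exact: g_inc pn H1 H2.
- move=> x u w uw Huw Hc p S' [Hp [a [Ha [Hs HS]]]].
  have pn : (p <= n)%N by case/andP: Hp => /andP [].
  have wu : w != u by rewrite eq_sym.
  have [au1 au2] : 0 <= a u /\ a u <= 1 by apply/andP; exact: Ha.
  have [aw1 aw2] : 0 <= a w /\ a w <= 1 by apply/andP; exact: Ha.
  case: (lerP (S' u - 1) (S' w)) => Hcase.
    exists (tr S' u w); split.
      split => //; exists a; split => //; split => // k.
      rewrite /tr; case: (eqVneq k u) => [->|ku]; first by rewrite HS; lra.
      case: (eqVneq k w) => [->|kw]; first by rewrite HS; lra.
      by rewrite HS.
    apply: GT => //; apply: cond_le Hc _; rewrite HS; lra.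
  exists (fun k => S' (tperm u w k)); split; last exact: g_perm.
  split => //.
  pose b := fun k => if k == u then x w + a w + 1 - x u
                     else if k == w then x u + a u - x w - 1 else a k.
  move: Hcase; rewrite !HS => Hcase.
  exists b; split; last split.
  - move=> k; rewrite /b.
    case: (eqVneq k u) => [_|ku]; first by apply/andP; split; lra.
    case: (eqVneq k w) => [_|kw]; first by apply/andP; split; lra.
    exact: Ha.
  - rewrite -Hs; apply: (sum_pair uw).
      by move=> k ku kw; rewrite /b (negbTE ku) (negbTE kw).
    rewrite /b eqxx (negbTE wu) eqxx; lra.
  move=> k; rewrite /tr /b.
  case: (eqVneq k u) => [->|ku]; first by rewrite tpermL HS; lra.
  case: (eqVneq k w) => [->|kw]; first by rewrite tpermR HS; lra.
  by rewrite tpermD 1?eq_sym // HS.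
Qed.

Lemma MON (R : realType) pm fm n t : forall x y : state R n,
  O fm x y -> (GREEDY pm fm x t <= GREEDY pm fm y t)%E.
Proof.
elim: t => [|t IH] x y Hxy /=.
  by apply: BL; apply: O_dom Hxy.
apply: ge_ereal_sup => _ [p [S' [HS ->]]].
have [S'' [HS'' HO]] := SIM Hxy HS.
apply: le_trans (IH _ _ HO) _.
by apply: ereal_sup_ubound; exists p, S''.
Qed.

Theorem theorem4p4 (R : realType) (pm : proc_mode) (fm : fill_mode)
  (n : nat) (A : state R n) (t : nat) :
  GREEDY pm fm A t = OPT pm fm A t.
Proof.
elim: t A => [//|t IH] A /=.
congr ereal_sup.
rewrite eqEsubset; split => _ [p [S' [HS ->]]]; exists p, S'; split => //;
  last apply: esym.
all: have pn : (p <= n)%N by case: HS => /andP [/andP [_ ->]].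
all: apply/eqP; rewrite eq_le; apply/andP; split.
- apply: le_ereal_inf_tmp => _ [S'' [[C [HC HS'']] ->]].
  rewrite -IH; apply: MON; rewrite greedyE.
  apply: Otrans (@L1 _ fm _ S' (Pg p S') C (@Pg_valid _ _ p S') _) _; first by rewrite HC card_Pg.
  by apply: Oeq => i; rewrite HS''.
- apply: ereal_inf_lbound; exists (greedy_move fm p S'); split => //.
  exists (Pg p S'); split; first by rewrite card_Pg.
  by move=> i; rewrite greedyE.
- apply: le_ereal_inf_tmp => _ [S'' [[C [HC HS'']] ->]].
  rewrite -IH; apply: MON; rewrite greedyE.
  apply: Otrans (@L1 _ fm _ S' (Pg p S') C (@Pg_valid _ _ p S') _) _; first by rewrite HC card_Pg.
  by apply: Oeq => i; rewrite HS''.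
- apply: ereal_inf_lbound; exists (greedy_move fm p S'); split => //.
  exists (Pg p S'); split; first by rewrite card_Pg.
  by move=> i; rewrite greedyE.
Qed.
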